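(* Let $\mathcal C$ be a category with cofibrations enriched over abelian groups, $w$ an admissible class of morphisms in $\mathcal C$ such that $(\mathcal C,w)$ satisfies the factorization axiom, $\mathcal S$ a $w$-Serre subcategory of $\mathcal C$, and $u$ an admissible class of morphisms with $w\subseteq u$. Then: (1) the class $w_{\mathcal S}$ of $\mathcal S$-weak equivalences is an admissible class of morphisms in $\mathcal C$ containing $w$; (2) $\mathcal C^{w_{\mathcal S}}=\mathcal S$ and $w_{\mathcal C^u}=u$.
   Context: A cofibration sequence is $x\rightarrowtail y\twoheadrightarrow y/x$. A class $w$ is admissible if it contains all isomorphisms, satisfies two-out-of-three, and for any commutative diagram of cofibration sequences $x\rightarrowtail y\twoheadrightarrow y/x$ over $x'\rightarrowtail y'\twoheadrightarrow y'/x'$ with vertical maps $a,b,c$, two of $a,b,c$ in $w$ implies the third is in $w$. Factorization axiom: every $f\colon x\to y$ factors as $f=p_f i_f$ with $i_f\colon x\rightarrowtail u_f$ a cofibration and $p_f\colon u_f\to y$ in $w$; $(i_f,p_f,u_f)$ is a factorization of $f$. A $w$-Serre subcategory $\mathcal S$ is a full subcategory such that for every cofibration sequence two of $x,y,y/x$ in $\mathcal S$ implies the third is, and which is closed under finite zig-zags of morphisms in $w$. For an admissible class $u\supseteq w$, $\mathcal C^u$ is the full subcategory of objects $x$ with $0\to x$ in $u$ (it is a $w$-Serre subcategory). A morphism $f\colon x\to y$ is an $\mathcal S$-weak equivalence if for some (equivalently, every) factorization $(i_f,p_f,u_f)$ of $f$ the cokernel $u_f/x$ lies in $\mathcal S$;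 $w_{\mathcal S}$ denotes the class of $\mathcal S$-weak equivalences. *)

(* Defs.v *)
From HB Require Import structures.
From mathcomp Require Import all_boot all_algebra.
From Stdlib Require Import Relations.
Set Implicit Arguments. Unset Strict Implicit. Unset Printing Implicit Defensive.
Import GRing.Theory.
Local Open Scope ring_scope.

Record AbCat := {
  Obj :> Type;
  CHom : Obj -> Obj -> zmodType;
  idm : forall x, CHom x x;
  comp : forall x y z, CHom y z -> CHom x y -> CHom x z;
  comp_assoc : forall x y z t (h : CHom z t) (g : CHom y z) (f : CHom x y),
      comp h (comp g f) = comp (comp h g) f;
  comp_id_l : forall x y (f : CHom x y), comp (idm y) f = f;
  comp_id_r : forall x y (f : CHom x y), comp f (idm x) = f;
  comp_addl : forall x y z (g g' : CHom y z) (f : CHom x y),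
      comp (g + g') f = comp g f + comp g' f;
  comp_addr : forall x y z (g : CHom y z) (f f' : CHom x y),
      comp g (f + f') = comp g f + comp g f'
}.
Arguments CHom {_}.
Arguments idm {_}.
Arguments comp {_ x y z}.

Definition is_iso (C : AbCat) (x y : C) (f : CHom x y) : Prop :=
  exists g : CHom y x, comp g f = idm x /\ comp f g = idm y.

(* Pushout square   a --f--> b
                    |g       |g'
                    v        v
                    c --f'-> d      *)
Definition is_pushout (C : AbCat) (a b c d : C)
  (f : CHom a b) (g : CHom a c) (f' : CHom c d) (g' : CHom b d) : Prop :=
  comp g' f = comp f' g /\
  forall (e : C) (h : CHom b e) (k : CHom c e), comp h f = comp k g ->
    exists m : CHom d e, (comp m g' = h /\ comp m f' = k) /\
      forall m' : CHom d e, comp m' g' = h -> comp m' f' = k -> m' = m.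

Record CofCat := {
  cat :> AbCat;
  zero : cat;
  zero_initial : forall (x : cat) (f g : CHom zero x), f = g;
  zero_terminal : forall (x : cat) (f g : CHom x zero), f = g;
  cof : forall x y : cat, CHom x y -> Prop;
  cof_iso : forall (x y : cat) (f : CHom x y), is_iso f -> cof f;
  cof_zero : forall x : cat, cof (0 : CHom zero x);
  cof_comp : forall (x y z : cat) (g : CHom y z) (f : CHom x y),
      cof f -> cof g -> cof (comp g f);
  cof_pushout : forall (a b c : cat) (i : CHom a b) (f : CHom a c), cof i ->
      exists (d : cat) (i' : CHom c d) (f' : CHom b d),
        is_pushout i f i' f' /\ cof i'
}.
Arguments zero {_}.
Arguments cof {_ x y}.

Definition MorClass (C : CofCat) := forall x y : C, CHom x y -> Prop.

Definition cofseq (C : CofCat) (x y q : C) (i : CHom x y) (p : CHom y q) : Prop :=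
  cof i /\ is_pushout i (0 : CHom x zero) (0 : CHom zero q) p.

Definition admissible (C : CofCat) (w : MorClass C) : Prop :=
  (forall (x y : C) (f : CHom x y), is_iso f -> w _ _ f) /\
  (forall (x y z : C) (f : CHom x y) (g : CHom y z),
      (w _ _ f -> w _ _ g -> w _ _ (comp g f)) /\
      (w _ _ f -> w _ _ (comp g f) -> w _ _ g) /\
      (w _ _ g -> w _ _ (comp g f) -> w _ _ f)) /\
  (forall (x y q x' y' q' : C) (i : CHom x y) (p : CHom y q)
          (i' : CHom x' y') (p' : CHom y' q')
          (a : CHom x x') (b : CHom y y') (c : CHom q q'),
      cofseq i p -> cofseq i' p' ->
      comp b i = comp i' a -> comp c p = comp p' b ->
      (w _ _ a -> w _ _ b -> w _ _ c) /\
      (w _ _ a -> w _ _ c -> w _ _ b) /\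
      (w _ _ b -> w _ _ c -> w _ _ a)).

Definition factorization_axiom (C : CofCat) (w : MorClass C) : Prop :=
  forall (x y : C) (f : CHom x y),
    exists (u : C) (i : CHom x u) (p : CHom u y), cof i /\ w _ _ p /\ comp p i = f.

Definition wzigzag (C : CofCat) (w : MorClass C) : relation C :=
  clos_refl_sym_trans C (fun x y => exists f : CHom x y, w _ _ f).

(* w-Serre subcategory (full subcategory given by a predicate on objects);
   we require it to contain the zero object (i.e. to be nonempty). *)
Definition wSerre (C : CofCat) (w : MorClass C) (S : C -> Prop) : Prop :=
  S zero /\
  (forall (x y q : C) (i : CHom x y) (p : CHom y q), cofseq i p ->
      (S x -> S y -> S q) /\ (S x -> S q -> S y) /\ (S y -> S q -> S x)) /\
  (forall x y : C, wzigzag w x y -> S x -> S y).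

Definition Csup (C : CofCat) (u : MorClass C) : C -> Prop :=
  fun x => u _ _ (0 : CHom zero x).

Definition wS (C : CofCat) (w : MorClass C) (S : C -> Prop) : MorClass C :=
  fun x y f => exists (u q : C) (i : CHom x u) (p : CHom u y) (pi : CHom u q),
    cof i /\ w _ _ p /\ comp p i = f /\ cofseq i pi /\ S q.
Arguments wS {C} w S x y f.
Arguments Csup {C} u x.

(* Main.v *)
Require Import Defs.
From HB Require Import structures.
From mathcomp Require Import all_boot all_algebra.
From Stdlib Require Import Relations Setoid.
Set Implicit Arguments. Unset Strict Implicit. Unset Printing Implicit Defensive.
Import GRing.Theory.
Local Open Scope ring_scope.
Notation cmp := Defs.comp.

Lemma comp0l {C : AbCat} (x y z : C) (f : CHom x y) : cmp (0 : CHom y z) f = 0.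
Proof.
have H := comp_addl (0 : CHom y z) 0 f. rewrite addr0 in H.
by apply: (addrI (cmp (0 : CHom y z) f)); rewrite addr0 -H.
Qed.
Lemma comp0r {C : AbCat} (x y z : C) (g : CHom y z) : cmp g (0 : CHom x y) = 0.
Proof.
have H := comp_addr g (0 : CHom x y) 0. rewrite addr0 in H.
by apply: (addrI (cmp g (0 : CHom x y))); rewrite addr0 -H.
Qed.
Definition iscoker {C : CofCat} (x y q : C) (i : CHom x y) (p : CHom y q) :=
  cmp p i = 0 /\ forall (e : C) (h : CHom y e), cmp h i = 0 ->
    exists m : CHom q e, cmp m p = h /\ forall m' : CHom q e, cmp m' p = h -> m' = m.

Lemma cofseqE {C : CofCat} (x y q : C) (i : CHom x y) (p : CHom y q) :
  cofseq i p <-> cof i /\ iscoker i p.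
Proof.
split.
- move=> [ci [sq un]]; split => //; split; first by rewrite sq comp0l.
  move=> e h hi.
  have [m [[m1 m2] mu]] := un e h (0 : CHom zero e) (ltac:(by rewrite hi comp0l)).
  exists m; split => // m' hm'; apply: mu => //; exact: zero_initial.
- move=> [ci [p0 un]]; split => //; split; first by rewrite p0 comp0l.
  move=> e h k hk.
  have [m [m1 mu]] := un e h (ltac:(by rewrite hk comp0r)).
  exists m; split; first by split => //; exact: zero_initial.
  by move=> m' h1 _; apply: mu.
Qed.

Lemma coker_epi {C : CofCat} (x y q e : C) (i : CHom x y) (p : CHom y q) (m m' : CHom q e) :
  iscoker i p -> cmp m p = cmp m' p -> m = m'.
Proof.
move=> [p0 un] H.
have [n [n1 nu]] := un e (cmp m p) (ltac:(by rewrite -comp_assoc p0 comp0r)).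
by rewrite (nu m) // (nu m') // -H.
Qed.

Lemma coker_ex {C : CofCat} (x y : C) (i : CHom x y) :
  cof i -> exists (q : C) (p : CHom y q), cofseq i p.
Proof.
move=> ci; have [d [i' [f' [po _]]]] := cof_pushout (0 : CHom x zero) ci.
exists d, f'; split => //.
by rewrite (zero_initial i' 0) in po.
Qed.

Lemma coker_map {C : CofCat} (x y q x' y' q' : C) (i : CHom x y) (p : CHom y q)
  (i' : CHom x' y') (p' : CHom y' q') (a : CHom x x') (b : CHom y y') :
  iscoker i p -> iscoker i' p' -> cmp b i = cmp i' a ->
  exists c : CHom q q', cmp c p = cmp p' b.
Proof.
move=> [p0 un] [p0' _] sq.
have [m [m1 _]] := un q' (cmp p' b) (ltac:(by rewrite -comp_assoc sq comp_assoc p0' comp0l)).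
by exists m.
Qed.

Lemma pushout_uniq {C : AbCat} (a b c d e : C) (f : CHom a b) (g : CHom a c)
  (f' : CHom c d) (g' : CHom b d) (m1 m2 : CHom d e) :
  is_pushout f g f' g' -> cmp m1 g' = cmp m2 g' -> cmp m1 f' = cmp m2 f' -> m1 = m2.
Proof.
move=> [sq un] H1 H2.
have [M [_ Mu]] := un e (cmp m1 g') (cmp m1 f') (ltac:(by rewrite -!comp_assoc sq)).
by rewrite (Mu m1) // (Mu m2) // -?H1 -?H2.
Qed.

Lemma pushout_sym {C : AbCat} (a b c d : C) (f : CHom a b) (g : CHom a c)
  (f' : CHom c d) (g' : CHom b d) :
  is_pushout f g f' g' -> is_pushout g f g' f'.
Proof.
move=> [sq un]; split; first by [].
move=> e h k hk.
have [m [[m1 m2] mu]] := un e k h (esym hk).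
exists m; split => // m' h1 h2; exact: mu.
Qed.

Lemma pushout_coker {C : CofCat} (a b c d q : C) (f : CHom a b) (g : CHom a c)
  (f' : CHom c d) (g' : CHom b d) (p : CHom b q) :
  iscoker f p -> is_pushout f g f' g' ->
  exists pi : CHom d q, cmp pi g' = p /\ iscoker f' pi.
Proof.
move=> cp po; have [p0 pun] := cp; have [sq un] := po.
have [m [[m1 m2] _]] := un q p 0 (ltac:(by rewrite p0 comp0l)).
exists m; split => //; split => // e h hf.
have [n [n1 nu]] := pun e (cmp h g') (ltac:(by rewrite -comp_assoc sq comp_assoc hf comp0l)).
exists n; split.
  apply: (pushout_uniq po); rewrite -comp_assoc ?m1 ?m2 //.
  by rewrite comp0r hf.
move=> n' hn'; apply: nu; by rewrite -m1 comp_assoc hn'.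
Qed.

Lemma L3 {C : CofCat} (x y z q1 q3 : C) (i : CHom x y) (j : CHom y z)
  (p1 : CHom y q1) (p3 : CHom z q3) :
  cof j -> iscoker i p1 -> iscoker j p3 ->
  exists (d : C) (f' : CHom z d) (j' : CHom q1 d) (t : CHom d q3),
    iscoker (cmp j i) f' /\ cof j' /\ iscoker j' t /\ cmp j' p1 = cmp f' j /\ cmp t f' = p3.
Proof.
move=> cj c1 c3; have [p10 un1] := c1; have [p30 un3] := c3.
have [d [j' [f' [po cj']]]] := cof_pushout p1 cj.
have [sq un] := po.
have [t [[t1 t2] _]] := un q3 p3 0 (ltac:(by rewrite p30 comp0l)).
exists d, f', j', t; split; last first.
  split => //; split; last by split.
  split => // e h hj.
  have [n [n1 nu]] := un3 e (cmp h f') (ltac:(by rewrite -comp_assoc sq comp_assoc hj comp0l)).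
  exists n; split.
    apply: (pushout_uniq po); rewrite -comp_assoc ?t1 ?t2 //.
    by rewrite comp0r hj.
  move=> n' hn'; apply: nu; by rewrite -t1 comp_assoc hn'.
split; first by rewrite comp_assoc sq -comp_assoc p10 comp0r.
move=> e h hji.
have [k [k1 ku]] := un1 e (cmp h j) (ltac:(by rewrite -comp_assoc hji)).
have [m [[m1 m2] mu]] := un e h k (esym k1).
exists m; split => // m' hm'; apply: mu => //.
apply: (coker_epi c1); by rewrite -comp_assoc -sq comp_assoc hm' k1.
Qed.

Lemma pushout_cof2 {C : CofCat} (a b c : C) (f : CHom a b) (g : CHom a c) :
  cof f -> cof g ->
  exists (d : C) (f' : CHom c d) (g' : CHom b d), is_pushout f g f' g' /\ cof f' /\ cof g'.
Proof.
move=> cf cg.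
have [d [f' [g' [po cf']]]] := cof_pushout g cf.
have [d2 [f2 [g2 [po2 cf2]]]] := cof_pushout f cg.
have [sq un] := po; have [sq2 un2] := po2.
have [phi [[ph1 ph2] _]] := un2 d f' g' (esym sq).
have [psi [[ps1 ps2] _]] := un d2 f2 g2 (esym sq2).
exists d, f', g'; split => //; split => //.
rewrite -ph2; apply: cof_comp => //; apply: cof_iso; exists psi; split.
  apply: (pushout_uniq po2); by rewrite -comp_assoc ?ph1 ?ph2 ?ps1 ?ps2 !comp_id_l.
apply: (pushout_uniq po); by rewrite -comp_assoc ?ph1 ?ph2 ?ps1 ?ps2 !comp_id_l.
Qed.

Lemma iso_idm {C : AbCat} (x : C) : is_iso (idm x).
Proof. by exists (idm x); rewrite comp_id_l. Qed.

Lemma S_fwd {C : CofCat} (w : MorClass C) (S : C -> Prop) (x y : C) (f : CHom x y) :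
  wSerre w S -> w _ _ f -> S x -> S y.
Proof. move=> [_ [_ hz]] hf; apply: hz; apply: rst_step; by exists f. Qed.

Lemma S_bwd {C : CofCat} (w : MorClass C) (S : C -> Prop) (x y : C) (f : CHom x y) :
  wSerre w S -> w _ _ f -> S y -> S x.
Proof. move=> [_ [_ hz]] hf; apply: hz; apply: rst_sym; apply: rst_step; by exists f. Qed.

Lemma cofseq_id {C : CofCat} (x : C) : cofseq (idm x) (0 : CHom x zero).
Proof.
apply/cofseqE; split; first exact/cof_iso/iso_idm.
split; first by rewrite comp0l.
move=> e h hh; rewrite comp_id_r in hh; subst h.
exists 0; split; first by rewrite comp0l.
move=> m' _; exact: zero_initial.
Qed.

Lemma indep {C : CofCat} (w : MorClass C) (S : C -> Prop)
  (x y u u' q q' : C) (f : CHom x y) (i : CHom x u) (p : CHom u y) (pi : CHom u q)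
  (i' : CHom x u') (p' : CHom u' y) (pi' : CHom u' q') :
  admissible w -> factorization_axiom w -> wSerre w S ->
  cofseq i pi -> w _ _ p -> cmp p i = f ->
  cofseq i' pi' -> w _ _ p' -> cmp p' i' = f -> S q -> S q'.
Proof.
move=> [hiso [h23 hgl]] hfa hS cs wp pf cs' wp' pf' Sq.
have [ci _] := cs; have [ci' _] := cs'.
have [P [g [f_ [po cg]]]] := cof_pushout i ci'.
have [sq un] := po.
have [H [[H1 H2] _]] := un y p' p (ltac:(by rewrite pf pf')).
have [v [j [r [cj [wr rj]]]]] := hfa _ _ H.
have wjg : w _ _ (cmp j g).
  have [_ [_ h3]] := h23 _ _ _ (cmp j g) r; apply: h3 => //.
  by rewrite comp_assoc rj H2.
have wjf : w _ _ (cmp j f_).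
  have [_ [_ h3]] := h23 _ _ _ (cmp j f_) r; apply: h3 => //.
  by rewrite comp_assoc rj H1.
have cjgi : cof (cmp (cmp j g) i) by apply: cof_comp => //; apply: cof_comp.
have [q'' [pi'' cs'']] := coker_ex cjgi.
have [_ kc] := proj1 (cofseqE _ _) cs; have [_ kc'] := proj1 (cofseqE _ _) cs';
have [_ kc''] := proj1 (cofseqE _ _) cs''.
have e1 : cmp (cmp j g) i = cmp (cmp (cmp j g) i) (idm x) by rewrite comp_id_r.
have e2 : cmp (cmp j f_) i' = cmp (cmp (cmp j g) i) (idm x)
  by rewrite comp_id_r -!comp_assoc sq.
have [c hc] := coker_map kc kc'' e1.
have [c' hc'] := coker_map kc' kc'' e2.
have [wc _] := hgl _ _ _ _ _ _ _ _ _ _ _ _ _ cs cs'' e1 hc.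
have [wc' _] := hgl _ _ _ _ _ _ _ _ _ _ _ _ _ cs' cs'' e2 hc'.
apply: (S_bwd hS (wc' (hiso _ _ _ (iso_idm _)) wjf)).
exact: (S_fwd hS (wc (hiso _ _ _ (iso_idm _)) wjg)).
Qed.

Lemma wS_char {C : CofCat} (w : MorClass C) (S : C -> Prop)
  (x y u q : C) (f : CHom x y) (i : CHom x u) (p : CHom u y) (pi : CHom u q) :
  admissible w -> factorization_axiom w -> wSerre w S ->
  cofseq i pi -> w _ _ p -> cmp p i = f -> (wS w S _ _ f <-> S q).
Proof.
move=> hw hfa hS cs wp pf; split.
- move=> [u' [q' [i' [p' [pi' [_ [wp' [pf' [cs' Sq']]]]]]]]].
  exact: (indep hw hfa hS cs' wp' pf' cs wp pf).
- move=> Sq; exists u, q, i, p, pi; have [ci _] := cs; by [].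
Qed.

Lemma w_wS {C : CofCat} (w : MorClass C) (S : C -> Prop) (x y : C) (f : CHom x y) :
  admissible w -> factorization_axiom w -> wSerre w S -> w _ _ f -> wS w S _ _ f.
Proof.
move=> hw hfa hS wf; have [hiso [h23 hgl]] := hw.
have [u [i [p [ci [wp pf]]]]] := hfa _ _ f.
have wi : w _ _ i by have [_ [_ h3]] := h23 _ _ _ i p; apply: h3 => //; rewrite pf.
have [q [pi cs]] := coker_ex ci.
have [_ [p0 _]] := proj1 (cofseqE _ _) cs.
have e1 : cmp i (idm x) = cmp i (idm x) by [].
have e2 : cmp (0 : CHom zero q) (0 : CHom x zero) = cmp pi i by rewrite p0 comp0l.
have [wc _] := hgl _ _ _ _ _ _ _ _ _ _ _ _ _ (cofseq_id x) cs e1 e2.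
apply/(wS_char hw hfa hS cs wp pf).
apply: (S_fwd hS (wc (hiso _ _ _ (iso_idm _)) wi)); by case: hS.
Qed.

Lemma wS_wl {C : CofCat} (w : MorClass C) (S : C -> Prop) (x y z : C)
  (s : CHom x y) (e : CHom y z) :
  admissible w -> factorization_axiom w -> wSerre w S -> w _ _ e ->
  (wS w S _ _ (cmp e s) <-> wS w S _ _ s).
Proof.
move=> hw hfa hS we; have [hiso [h23 hgl]] := hw.
have [u [i [p [ci [wp pf]]]]] := hfa _ _ s.
have [q [pi cs]] := coker_ex ci.
have wep : w _ _ (cmp e p) by have [h1 _] := h23 _ _ _ p e; apply: h1.
rewrite (wS_char hw hfa hS cs wp pf).
apply: (wS_char hw hfa hS cs wep); by rewrite -comp_assoc pf.
Qed.

Lemma wS_wr {C : CofCat} (w : MorClass C) (S : C -> Prop) (u x z : C)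
  (p : CHom u x) (g : CHom x z) :
  admissible w -> factorization_axiom w -> wSerre w S -> w _ _ p ->
  (wS w S _ _ (cmp g p) <-> wS w S _ _ g).
Proof.
move=> hw hfa hS wp; have [hiso [h23 hgl]] := hw.
have [v2 [i2 [p2 [ci2 [wp2 pf2]]]]] := hfa _ _ g.
have [q2 [pi2 cs2]] := coker_ex ci2.
have [v3 [i3 [p3 [ci3 [wp3 pf3]]]]] := hfa _ _ (cmp i2 p).
have [q3 [pi3 cs3]] := coker_ex ci3.
have [_ kc2] := proj1 (cofseqE _ _) cs2; have [_ kc3] := proj1 (cofseqE _ _) cs3.
have e1 : cmp p3 i3 = cmp i2 p by [].
have [c hc] := coker_map kc3 kc2 e1.
have [wc _] := hgl _ _ _ _ _ _ _ _ _ _ _ _ _ cs3 cs2 e1 hc.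
have wpp : w _ _ (cmp p2 p3) by have [h1 _] := h23 _ _ _ p3 p2; apply: h1.
rewrite (wS_char hw hfa hS cs2 wp2 pf2).
rewrite (wS_char (f := cmp g p) hw hfa hS cs3 wpp); last by rewrite -comp_assoc pf3 comp_assoc pf2.
split; [exact: S_fwd hS (wc wp wp3) | exact: S_bwd hS (wc wp wp3)].
Qed.

Lemma wS_adm {C : CofCat} (w : MorClass C) (S : C -> Prop) :
  admissible w -> factorization_axiom w -> wSerre w S -> admissible (wS w S).
Proof.
move=> hw hfa hS; have [hiso [h23 hgl]] := hw.
have [S0 [Sgl Sz]] := hS.
split; first by move=> x y f fi; apply: w_wS => //; exact: hiso.
split.
- move=> x y z f g.
  have [u1 [i [p [ci [wp pf]]]]] := hfa _ _ f.
  have [q1 [pi1 cs1]] := coker_ex ci.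
  have [v [j [p' [cj [wp' pf']]]]] := hfa _ _ (cmp g p).
  have [q3 [pi3 cs3]] := coker_ex cj.
  have [_ kc1] := proj1 (cofseqE _ _) cs1; have [_ kc3] := proj1 (cofseqE _ _) cs3.
  have [d [f' [j' [t [kd [cj' [kt [_ _]]]]]]]] := L3 cj kc1 kc3.
  have csd : cofseq (cmp j i) f' by apply/cofseqE; split => //; apply: cof_comp.
  have cst : cofseq j' t by apply/cofseqE.
  have Ef := wS_char hw hfa hS cs1 wp pf.
  have Egf := wS_char (f := cmp g f) hw hfa hS csd wp'
    (ltac:(by rewrite comp_assoc pf' -comp_assoc pf)).
  have Eg : wS w S _ _ g <-> S q3.
    rewrite -(wS_wr g hw hfa hS wp); exact: (wS_char hw hfa hS cs3 wp' pf').
  have [G1 [G2 G3]] := Sgl _ _ _ _ _ cst.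
  rewrite Ef Egf Eg; split; [|split]; auto.
- move=> x y q x' y' q' i pi i' pi' a b c cs cs' sq1 sq2.
  have [ua [ia [pa [cia [wpa pfa]]]]] := hfa _ _ a.
  have [qa [pia csa]] := coker_ex cia.
  have [ci _] := cs; have [ci' _] := cs'.
  have [P [g1 [h1 [po [cg1 ch1]]]]] := pushout_cof2 cia ci.
  have [sq un] := po.
  have [K [[K1 K2] _]] := un y' (cmp i' pa) b
    (ltac:(by rewrite -comp_assoc pfa sq1)).
  have [v [j [r [cj [wr rj]]]]] := hfa _ _ K.
  have [qv [piv csv]] := coker_ex cj.
  have [_ kca] := proj1 (cofseqE _ _) csa; have [_ kc] := proj1 (cofseqE _ _) cs.
  have [_ kc'] := proj1 (cofseqE _ _) cs'; have [_ kcv] := proj1 (cofseqE _ _) csv.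
  have [pal [pal1 kal]] := pushout_coker kca po.
  have [pig [pig1 kgm]] := pushout_coker kc (pushout_sym po).
  have [d1 [f1 [j1 [t1 [kd1 [cj1 [kt1 [_ _]]]]]]]] := L3 cj kal kcv.
  have [d2 [f2 [s [t2 [kd2 [cs_ [kt2 [E2 _]]]]]]]] := L3 cj kgm kcv.
  have e1 : cmp r (cmp j h1) = cmp i' pa by rewrite comp_assoc rj.
  have [e he] := coker_map kd2 kc' e1.
  have csd2 : cofseq (cmp j h1) f2 by apply/cofseqE; split => //; apply: cof_comp.
  have [we _] := hgl _ _ _ _ _ _ _ _ _ _ _ _ _ csd2 cs' e1 he.
  have we' := we wpa wr.
  have ce : c = cmp e s.
    apply: (coker_epi kc); rewrite sq2 -pig1.
    rewrite -!comp_assoc (comp_assoc s) E2 -comp_assoc (comp_assoc e) he.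
    by rewrite -comp_assoc (comp_assoc r) rj K2.
  have csd1 : cofseq (cmp j g1) f1 by apply/cofseqE; split => //; apply: cof_comp.
  have cst1 : cofseq j1 t1 by apply/cofseqE.
  have cst2 : cofseq s t2 by apply/cofseqE.
  have Ea := wS_char hw hfa hS csa wpa pfa.
  have Eb := wS_char (f := b) hw hfa hS csd1 wr
    (ltac:(by rewrite comp_assoc rj K2)).
  have Ec : wS w S _ _ c <-> S qv.
    rewrite ce (wS_wl _ hw hfa hS we').
    apply: (wS_char hw hfa hS cst2 (hiso _ _ _ (iso_idm _))); exact: comp_id_l.
  have [G1 [G2 G3]] := Sgl _ _ _ _ _ cst1.
  rewrite Ea Eb Ec; split; [|split]; auto.
Qed.

Theorem proposition1p8 (C : CofCat) (w : MorClass C) (S : C -> Prop) (u : MorClass C) :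
  admissible w -> factorization_axiom w -> wSerre w S ->
  admissible u -> (forall (x y : C) (f : CHom x y), w _ _ f -> u _ _ f) ->
  (admissible (wS w S) /\
   (forall (x y : C) (f : CHom x y), w _ _ f -> wS w S _ _ f)) /\
  ((forall x : C, Csup (wS w S) x <-> S x) /\
   (forall (x y : C) (f : CHom x y), wS w (Csup u) _ _ f <-> u _ _ f)).
Proof.
move=> hw hfa hS hu wu.
have [hiso [h23 hgl]] := hw; have [uiso [u23 ugl]] := hu.
split; first by split; [exact: wS_adm | move=> x y f; exact: w_wS].
split.
- move=> x; split.
  + move=> [U [q [i [p [pi [ci [wp [pf [cs Sq]]]]]]]]].
    have [_ [p0 un]] := proj1 (cofseqE _ _) cs.
    have [m [m1 _]] := un U (idm U) (ltac:(by apply: zero_initial)).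
    have piso : is_iso pi.
      exists m; split => //.
      apply: (coker_epi (proj2 (proj1 (cofseqE _ _) cs))).
      by rewrite -comp_assoc m1 comp_id_l comp_id_r.
    apply: (S_fwd hS wp); exact: (S_bwd hS (hiso _ _ _ piso)).
  + move=> Sx.
    have [U [i [p [ci [wp pf]]]]] := hfa _ _ (0 : CHom zero x).
    have [q [pi cs]] := coker_ex ci.
    have [_ [p0 un]] := proj1 (cofseqE _ _) cs.
    have [m [m1 _]] := un U (idm U) (ltac:(by apply: zero_initial)).
    have piso : is_iso pi.
      exists m; split => //.
      apply: (coker_epi (proj2 (proj1 (cofseqE _ _) cs))).
      by rewrite -comp_assoc m1 comp_id_l comp_id_r.
    exists U, q, i, p, pi; do 4 split => //.
    apply: (S_fwd hS (hiso _ _ _ piso)); exact: (S_bwd hS wp).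
- move=> x y f; split.
  + move=> [U [q [i [p [pi [ci [wp [pf [cs uq]]]]]]]]].
    have [_ [p0 _]] := proj1 (cofseqE _ _) cs.
    have e1 : cmp i (idm x) = cmp i (idm x) by [].
    have e2 : cmp (0 : CHom zero q) (0 : CHom x zero) = cmp pi i by rewrite p0 comp0l.
    have [_ [ub _]] := ugl _ _ _ _ _ _ _ _ _ _ _ _ _ (cofseq_id x) cs e1 e2.
    have ui := ub (uiso _ _ _ (iso_idm _)) uq.
    have [h1 _] := u23 _ _ _ i p; rewrite -pf; exact: h1 (wu _ _ _ wp).
  + move=> uf.
    have [U [i [p [ci [wp pf]]]]] := hfa _ _ f.
    have [q [pi cs]] := coker_ex ci.
    have ui : u _ _ i.
      have [_ [_ h3]] := u23 _ _ _ i p; apply: h3; [exact: wu | by rewrite pf].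
    have [_ [p0 _]] := proj1 (cofseqE _ _) cs.
    have e1 : cmp i (idm x) = cmp i (idm x) by [].
    have e2 : cmp (0 : CHom zero q) (0 : CHom x zero) = cmp pi i by rewrite p0 comp0l.
    have [uc _] := ugl _ _ _ _ _ _ _ _ _ _ _ _ _ (cofseq_id x) cs e1 e2.
    exists U, q, i, p, pi; do 4 split => //.
    exact: uc (uiso _ _ _ (iso_idm _)) ui.
Qed.
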